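(* Let $X$ be an absolutely continuous real random variable, symmetric and unimodal about $0$, whose cdf $F_X$ is $C^1$ with density $g=F_X'$, and let $\beta\in(0,1]$. Assume that $g(t+\lambda_t^\beta)g(t-\lambda_t^\beta)>0$ and $$g(t)\ge2\frac{g(t+\lambda_t^\beta)\,g(t-\lambda_t^\beta)}{g(t+\lambda_t^\beta)+g(t-\lambda_t^\beta)}\quad\text{for all }t\in\mathbb{R}.$$ Then $t\mapsto LD_S^\beta(t,F_X)$ is non-increasing on $t>0$ and non-decreasing on $t<0$.
   Context: $\lambda_t^\beta=\inf\{\lambda>0: F_X(t+\lambda)-F_X(t-\lambda)\ge\beta\}$ and $LD_S^\beta(t,F_X)=\frac{2}{\beta^2}\big(F_X(t+\lambda_t^\beta)-F_X(t)\big)\big(F_X(t)-F_X(t-\lambda_t^\beta)\big)$. Symmetric and unimodal about $0$ means $g(-s)=g(s)$ and $g$ is nonincreasing on $[0,\infty)$. *)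

(* Defs.v *)
From Stdlib Require Import Reals.
From Coquelicot Require Import Coquelicot.
Open Scope R_scope.

(* lambda_t^beta = inf { l > 0 : F(t+l) - F(t-l) >= beta }.
   The set is bounded below by 0; Glb_Rbar returns p_infty if the set is empty,
   in which case [real] gives 0 (convention). *)
Definition lambda_beta (F : R -> R) (beta t : R) : R :=
  real (Glb_Rbar (fun l => 0 < l /\ F (t + l) - F (t - l) >= beta)).

Definition LD_S (beta t : R) (F : R -> R) : R :=
  let l := lambda_beta F beta t in
  2 / (beta ^ 2) * ((F (t + l) - F t) * (F t - F (t - l))).

(* Main.v *)
Require Import Defs.
From Stdlib Require Import Reals Lra.
From Coquelicot Require Import Coquelicot.
Open Scope R_scope.

Lemma lim_to_deriv (f : R -> R) (x L : R) :
  is_lim (fun h => (f (x + h) - f x) / h) 0 L -> is_derive f x L.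
Proof.
  intros H. apply is_derive_Reals. intros eps He.
  destruct (proj1 (filterlim_locally _ L) H (mkposreal eps He)) as [d Hd].
  exists d. intros h hn hd. apply Hd; auto.
  change (Rabs (h - 0) < d). rewrite Rminus_0_r. exact hd.
Qed.

Lemma Qcont (F : R -> R) (gc c : R) : is_derive F c gc ->
  filterlim (fun k => if Req_EM_T k 0 then gc else (F (c + k) - F c) / k)
    (locally 0) (locally gc).
Proof.
  intros HF. apply is_derive_Reals in HF.
  apply filterlim_locally. intros eps.
  destruct (HF eps (cond_pos eps)) as [d Hd]. exists d. intros k Hk.
  change (Rabs (k - 0) < d) in Hk. rewrite Rminus_0_r in Hk.
  change (Rabs ((if Req_EM_T k 0 then gc else (F (c + k) - F c) / k) - gc) < eps).
  destruct (Req_EM_T k 0).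
  - rewrite Rminus_eq_0, Rabs_R0. apply cond_pos.
  - apply Hd; auto.
Qed.

Lemma kcont (k : R -> R) : (forall h, Rabs (k h) <= 2 * Rabs h) ->
  filterlim k (locally' 0) (locally 0).
Proof.
  intros Hk. apply filterlim_locally. intros eps.
  assert (He : 0 < eps / 2) by (generalize (cond_pos eps); lra).
  exists (mkposreal _ He). intros y Hy _.
  change (Rabs (y - 0) < eps/2) in Hy. rewrite Rminus_0_r in Hy.
  change (Rabs (k y - 0) < eps). rewrite Rminus_0_r.
  specialize (Hk y). lra.
Qed.

Lemma lim_comb (f1 f2 f3 : R -> R) (l1 l2 l3 : R) :
  is_lim f1 0 l1 -> is_lim f2 0 l2 -> is_lim f3 0 l3 -> l1 + l2 <> 0 ->
  is_lim (fun h => 2 * (f1 h * f2 h) / (f1 h + f2 h) - f3 h) 0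
    (2 * (l1 * l2) / (l1 + l2) - l3).
Proof.
  intros H1 H2 H3 Hn.
  eapply is_lim_minus; [ | exact H3 | ].
  - eapply is_lim_div.
    + apply is_lim_mult. apply is_lim_const. apply is_lim_mult; eauto. exact I. exact I.
    + apply (is_lim_plus _ _ _ l1 l2); eauto. reflexivity.
    + simpl. intro E; injection E; auto.
    + simpl. exact I.
  - simpl. unfold is_Rbar_minus, is_Rbar_plus. simpl.
    unfold Rdiv. reflexivity.
Qed.

Lemma alg (q1 q2 q3 k1 k2 h : R) : 0 < q1 -> 0 < q2 -> h <> 0 ->
  q1 * k1 = q2 * k2 -> k1 + k2 = 2 * h ->
  (q1 * k1 - q3 * h) / h = 2 * (q1 * q2) / (q1 + q2) - q3.
Proof.
  intros p1 p2 hn E S.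
  assert (K : k1 = 2 * h * q2 / (q1 + q2)).
  { apply (Rmult_eq_reg_r (q1 + q2)); [|lra]. field_simplify; [|lra]. nra. }
  subst k1. field. lra.
Qed.

Lemma dA (F g : R -> R) (beta : R) (lam : R -> R)
  (F_deriv : forall x, is_derive F x (g x))
  (g_pos : forall x, 0 < g x)
  (Fstrict : forall x y, x < y -> F x < F y)
  (Hlam : forall t, F (t + lam t) - F (t - lam t) = beta) (t : R) :
  is_derive (fun t => F (t + lam t) - F t) t
    (2 * (g (t + lam t) * g (t - lam t)) / (g (t + lam t) + g (t - lam t)) - g t).
Proof.
  set (a := t + lam t). set (b := t - lam t).
  set (Q := fun c k => if Req_EM_T k 0 then g c else (F (c + k) - F c) / k).
  set (k1 := fun h => h + (lam (t + h) - lam t)).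
  set (k2 := fun h => h - (lam (t + h) - lam t)).
  assert (Qmul : forall c k, Q c k * k = F (c + k) - F c).
  { intros c k. unfold Q. destruct (Req_EM_T k 0).
    - subst. rewrite Rplus_0_r. ring.
    - field. auto. }
  assert (Qpos : forall c k, 0 < Q c k).
  { intros c k. unfold Q. destruct (Req_EM_T k 0). apply g_pos.
    destruct (Rlt_or_le 0 k).
    - apply Rdiv_lt_0_compat; auto. assert (F c < F (c + k)) by (apply Fstrict; lra). lra.
    - assert (F (c + k) < F c) by (apply Fstrict; lra).
      replace ((F (c + k) - F c) / k) with ((F c - F (c + k)) / (- k)) by (field; lra).
      apply Rdiv_lt_0_compat; lra. }
  assert (Heq : forall h, Q a (k1 h) * k1 h = Q b (k2 h) * k2 h).
  { intros h. rewrite !Qmul.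
    replace (a + k1 h) with (t + h + lam (t + h)) by (unfold a, k1; ring).
    replace (b + k2 h) with (t + h - lam (t + h)) by (unfold b, k2; ring).
    pose proof (Hlam t). pose proof (Hlam (t + h)). fold a b in H. lra. }
  assert (Hsum : forall h, k1 h + k2 h = 2 * h) by (intros; unfold k1, k2; ring).
  assert (Hb : forall h, Rabs (k1 h) <= 2 * Rabs h /\ Rabs (k2 h) <= 2 * Rabs h).
  { intros h. pose proof (Heq h). pose proof (Hsum h).
    pose proof (Qpos a (k1 h)). pose proof (Qpos b (k2 h)).
    set (x1 := k1 h) in *. set (x2 := k2 h) in *.
    set (p1 := Q a x1) in *. set (p2 := Q b x2) in *.
    assert (0 <= x1 * x2).
    { destruct (Rle_or_lt 0 (x1 * x2)); auto.
      assert (p1 * x1 * x2 = p2 * x2 * x2) by (rewrite H; ring).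
      nra. }
    split; split_Rabs; nra. }
  apply lim_to_deriv.
  apply (is_lim_ext_loc (fun h => 2 * (Q a (k1 h) * Q b (k2 h)) / (Q a (k1 h) + Q b (k2 h)) - Q t h)).
  - exists (mkposreal 1 Rlt_0_1). intros h _ hn.
    symmetry.
    replace (F (t + h + lam (t + h)) - F (t + h) - (F (t + lam t) - F t))
      with (Q a (k1 h) * k1 h - Q t h * h).
    + apply (alg _ _ _ _ (k2 h)); auto.
    + rewrite !Qmul. replace (a + k1 h) with (t + h + lam (t + h)) by (unfold a, k1; ring).
      unfold a. ring.
  - apply lim_comb.
    + apply (filterlim_comp _ _ _ k1 (Q a) _ (locally 0)).
      apply kcont. intros h; apply Hb. apply Qcont. apply F_deriv.
    + apply (filterlim_comp _ _ _ k2 (Q b) _ (locally 0)).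
      apply kcont. intros h; apply Hb. apply Qcont. apply F_deriv.
    + apply (filterlim_comp _ _ _ (fun h => h) (Q t) _ (locally 0)).
      apply kcont. intros h. pose proof (Rabs_pos h); lra. apply Qcont. apply F_deriv.
    + pose proof (g_pos a); pose proof (g_pos b); lra.
Qed.

Lemma deriv_cont f x l : is_derive f x l -> continuity_pt f x.
Proof. intros H. apply derivable_continuous_pt. exists l. apply is_derive_Reals. exact H. Qed.

Lemma deriv_decr f df a b : a <= b -> (forall x, is_derive f x (df x)) ->
  (forall x, a <= x <= b -> df x <= 0) -> f b <= f a.
Proof.
  intros ab Hd Hn.
  destruct (MVT_gen f a b df) as [c [Hc E]].
  - intros; apply Hd.
  - intros; eapply deriv_cont; apply Hd.
  - rewrite Rmin_left, Rmax_right in Hc by lra.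
    specialize (Hn c Hc). nra.
Qed.

Lemma strict_of_pos F g : (forall x, is_derive F x (g x)) -> (forall x, 0 < g x) ->
  forall x y, x < y -> F x < F y.
Proof.
  intros Hd Hp x y xy.
  destruct (MVT_gen F x y g) as [c [Hc E]].
  - intros; apply Hd.
  - intros; eapply deriv_cont; apply Hd.
  - specialize (Hp c). nra.
Qed.

Lemma g_nonneg F g : (forall x y, x <= y -> F x <= F y) ->
  (forall x, is_derive F x (g x)) -> forall x, 0 <= g x.
Proof.
  intros Hm Hd x. destruct (Rle_or_lt 0 (g x)) as [|Hn]; auto.
  exfalso. pose proof (proj1 (is_derive_Reals _ _ _) (Hd x) (- g x / 2)) as H.
  destruct H as [d Hd']. lra.
  assert (hp : 0 < d / 2) by (generalize (cond_pos d); lra).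
  assert (hn : d / 2 <> 0) by lra.
  assert (ha : Rabs (d/2) < d) by (rewrite Rabs_pos_eq; generalize (cond_pos d); lra).
  specialize (Hd' _ hn ha).
  assert (F x <= F (x + d/2)) by (apply Hm; lra).
  assert (0 <= (F (x + d / 2) - F x) / (d / 2)).
  { apply Rdiv_le_0_compat; lra. }
  revert Hd'. split_Rabs; lra.
Qed.

Lemma lim_pinf (f : R -> R) (l : R) (H : is_lim f p_infty l) :
  forall eps : posreal, exists M, forall y, M < y -> Rabs (f y - l) < eps.
Proof. intros eps. apply (proj1 (filterlim_locally f l) H eps). Qed.

Lemma lim_minf (f : R -> R) (l : R) (H : is_lim f m_infty l) :
  forall eps : posreal, exists M, forall y, y < M -> Rabs (f y - l) < eps.
Proof. intros eps. apply (proj1 (filterlim_locally f l) H eps). Qed.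

Lemma F_le1 F : (forall x y, x <= y -> F x <= F y) -> is_lim F p_infty 1 ->
  forall x, F x <= 1.
Proof.
  intros Hm Hl x. destruct (Rle_or_lt (F x) 1) as [|h]; auto. exfalso.
  destruct (lim_pinf F 1 Hl (mkposreal _ (Rlt_Rminus _ _ h))) as [M HM].
  simpl in HM. specialize (HM (Rmax M x + 1)).
  assert (F x <= F (Rmax M x + 1)) by (apply Hm; pose proof (Rmax_r M x); lra).
  pose proof (Rmax_l M x). specialize (HM ltac:(lra)). revert HM. split_Rabs; lra.
Qed.

Lemma F_ge0 F : (forall x y, x <= y -> F x <= F y) -> is_lim F m_infty 0 ->
  forall x, 0 <= F x.
Proof.
  intros Hm Hl x. destruct (Rle_or_lt 0 (F x)) as [|h]; auto. exfalso.
  assert (h' : 0 < 0 - F x) by lra.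
  destruct (lim_minf F 0 Hl (mkposreal _ h')) as [M HM].
  simpl in HM. specialize (HM (Rmin M x - 1)).
  assert (F (Rmin M x - 1) <= F x) by (apply Hm; pose proof (Rmin_r M x); lra).
  pose proof (Rmin_l M x). specialize (HM ltac:(lra)). revert HM. split_Rabs; lra.
Qed.

Lemma lam_nonneg F beta t : 0 <= lambda_beta F beta t.
Proof.
  unfold lambda_beta.
  pose proof (Glb_Rbar_correct (fun l => 0 < l /\ F (t + l) - F (t - l) >= beta)) as [H1 H2].
  destruct (Glb_Rbar _) as [r| |] eqn:E; simpl; try lra.
  apply (H2 (Finite 0)). intros x [hx _]. simpl. lra.
Qed.

Lemma dshift1 (F g : R -> R) (t x : R) : (forall x, is_derive F x (g x)) ->
  is_derive (fun x => F (t + x)) x (g (t + x)).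
Proof.
  intros Fd. apply is_derive_Reals.
  assert (Fd' := fun y => proj1 (is_derive_Reals F y (g y)) (Fd y)).
  replace (g (t + x)) with (g (t + x) * 1) by ring.
  apply (derivable_pt_lim_comp (fun x => t + x) F x 1 (g (t+x))).
  - replace 1 with (0 + 1) by ring. apply derivable_pt_lim_plus.
    apply derivable_pt_lim_const. apply derivable_pt_lim_id.
  - apply Fd'.
Qed.

Lemma dshift2 (F g : R -> R) (t x : R) : (forall x, is_derive F x (g x)) ->
  is_derive (fun x => F (t - x)) x (- g (t - x)).
Proof.
  intros Fd. apply is_derive_Reals.
  assert (Fd' := fun y => proj1 (is_derive_Reals F y (g y)) (Fd y)).
  replace (- g (t - x)) with (g (t - x) * (-1)) by ring.
  apply (derivable_pt_lim_comp (fun x => t - x) F x (-1) (g (t-x))).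
  - replace (-1) with (0 - 1) by ring. apply derivable_pt_lim_minus.
    apply derivable_pt_lim_const. apply derivable_pt_lim_id.
  - apply Fd'.
Qed.

Lemma lam_root (F g : R -> R) (beta t : R)
  (F_deriv : forall x, is_derive F x (g x))
  (Fstrict : forall x y, x < y -> F x < F y)
  (F_lim_minf : is_lim F m_infty 0)
  (F_lim_pinf : is_lim F p_infty 1)
  (Hb : 0 < beta < 1) :
  0 < lambda_beta F beta t /\
  F (t + lambda_beta F beta t) - F (t - lambda_beta F beta t) = beta.
Proof.
  set (G := fun l => F (t + l) - F (t - l)).
  assert (Gc : continuity G).
  { intros l. apply (continuity_pt_minus (fun l => F (t + l)) (fun l => F (t - l))).
    eapply deriv_cont. apply dshift1; auto. eapply deriv_cont. apply dshift2; auto. }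
  assert (Gs : forall x y, x < y -> G x < G y).
  { intros x y h. unfold G. pose proof (Fstrict (t + x) (t + y) ltac:(lra)).
    pose proof (Fstrict (t - y) (t - x) ltac:(lra)). lra. }
  assert (he : 0 < (1 - beta) / 2) by lra.
  destruct (lim_pinf F 1 F_lim_pinf (mkposreal _ he)) as [M1 HM1].
  destruct (lim_minf F 0 F_lim_minf (mkposreal _ he)) as [M2 HM2].
  simpl in HM1, HM2.
  set (l0 := Rabs M1 + Rabs M2 + Rabs t + 1).
  assert (l0p : 0 < l0) by (unfold l0; pose proof (Rabs_pos M1); pose proof (Rabs_pos M2); pose proof (Rabs_pos t); lra).
  assert (Gl0 : beta < G l0).
  { unfold G. specialize (HM1 (t + l0)). specialize (HM2 (t - l0)).
    assert (M1 < t + l0) by (unfold l0; pose proof (Rabs_pos M2); pose proof (Rle_abs M1); pose proof (Rabs_pos t); pose proof (Rle_abs (-t)); rewrite Rabs_Ropp in *; lra).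
    assert (t - l0 < M2) by (unfold l0; pose proof (Rabs_pos M1); pose proof (Rle_abs (-M2)); pose proof (Rabs_pos t); pose proof (Rle_abs t); rewrite Rabs_Ropp in *; lra).
    specialize (HM1 H). specialize (HM2 H0). revert HM1 HM2. split_Rabs; lra. }
  assert (G0 : G 0 = 0) by (unfold G; rewrite Rplus_0_r, Rminus_0_r; ring).
  destruct (IVT_gen G 0 l0 beta Gc) as [r [Hr Gr]].
  { rewrite Rmin_left, Rmax_right; lra. }
  rewrite Rmin_left, Rmax_right in Hr by lra.
  assert (rp : 0 < r).
  { destruct Hr as [[h|h] _]; auto. subst r. lra. }
  assert (E : lambda_beta F beta t = r).
  { unfold lambda_beta.
    rewrite (is_glb_Rbar_unique _ (Finite r)); [reflexivity|].
    split.
    - intros x [hx hG]. simpl. destruct (Rle_or_lt r x); auto.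
      exfalso. specialize (Gs _ _ H). unfold G in Gs, Gr. lra.
    - intros b Hb'. apply Hb'. split; auto. unfold G in Gr. lra. }
  rewrite E. split; auto.
Qed.

Lemma lam_one (F g : R -> R) (t : R)
  (F_mono : forall x y, x <= y -> F x <= F y)
  (Fstrict : forall x y, x < y -> F x < F y)
  (F_lim_minf : is_lim F m_infty 0)
  (F_lim_pinf : is_lim F p_infty 1) :
  lambda_beta F 1 t = 0.
Proof.
  unfold lambda_beta.
  rewrite (is_glb_Rbar_unique _ p_infty); [reflexivity|].
  split.
  - intros x [hx hG]. exfalso.
    pose proof (F_le1 F F_mono F_lim_pinf (t + x)).
    pose proof (F_ge0 F F_mono F_lim_minf (t - x - 1)).
    pose proof (Fstrict (t - x - 1) (t - x) ltac:(lra)). lra.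
  - intros b _. destruct b; simpl; auto.
Qed.

Lemma deriv_incr (f df : R -> R) a b : a <= b -> (forall x, is_derive f x (df x)) ->
  (forall x, a <= x <= b -> 0 <= df x) -> f a <= f b.
Proof.
  intros ab Hd Hn.
  destruct (MVT_gen f a b df) as [c [Hc E]].
  - intros; apply Hd.
  - intros; eapply deriv_cont; apply Hd.
  - rewrite Rmin_left, Rmax_right in Hc by lra.
    specialize (Hn c Hc). nra.
Qed.

Lemma dphi (F g : R -> R) (t x : R) : (forall x, is_derive F x (g x)) ->
  is_derive (fun x => F (t + x) + F (t - x)) x (g (t + x) - g (t - x)).
Proof.
  intros Fd. apply is_derive_Reals.
  replace (g (t + x) - g (t - x)) with (g (t + x) + - g (t - x)) by ring.
  apply (derivable_pt_lim_plus (fun x => F (t + x)) (fun x => F (t - x))).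
  apply is_derive_Reals, dshift1; auto.
  apply is_derive_Reals, dshift2; auto.
Qed.

Lemma half_pos (F g : R -> R) (t l : R)
  (F_deriv : forall x, is_derive F x (g x))
  (g_sym : forall s, g (- s) = g s)
  (g_unimodal : forall s u, 0 <= s -> s <= u -> g u <= g s) :
  0 <= t -> 0 <= l -> F (t + l) - F t <= F t - F (t - l).
Proof.
  intros ht hl.
  pose proof (deriv_decr (fun x => F (t + x) + F (t - x)) (fun x => g (t + x) - g (t - x)) 0 l hl
    (fun x => dphi F g t x F_deriv)) as H.
  simpl in H. rewrite Rplus_0_r, Rminus_0_r in H.
  cut (F (t + l) + F (t - l) <= F t + F t). lra.
  apply H. intros x [h0 h1].
  destruct (Rle_or_lt 0 (t - x)).
  - pose proof (g_unimodal (t - x) (t + x) H0 ltac:(lra)). lra.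
  - replace (t - x) with (- (x - t)) by ring. rewrite g_sym.
    pose proof (g_unimodal (x - t) (t + x) ltac:(lra) ltac:(lra)). lra.
Qed.

Lemma half_neg (F g : R -> R) (t l : R)
  (F_deriv : forall x, is_derive F x (g x))
  (g_sym : forall s, g (- s) = g s)
  (g_unimodal : forall s u, 0 <= s -> s <= u -> g u <= g s) :
  t <= 0 -> 0 <= l -> F t - F (t - l) <= F (t + l) - F t.
Proof.
  intros ht hl.
  pose proof (deriv_incr (fun x => F (t + x) + F (t - x)) (fun x => g (t + x) - g (t - x)) 0 l hl
    (fun x => dphi F g t x F_deriv)) as H.
  simpl in H. rewrite Rplus_0_r, Rminus_0_r in H.
  cut (F t + F t <= F (t + l) + F (t - l)). lra.
  apply H. intros x [h0 h1].
  replace (t - x) with (- (x - t)) by ring. rewrite g_sym.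
  destruct (Rle_or_lt 0 (t + x)).
  - pose proof (g_unimodal (t + x) (x - t) H0 ltac:(lra)). lra.
  - replace (t + x) with (- (- t - x)) by ring. rewrite g_sym.
    pose proof (g_unimodal (- t - x) (x - t) ltac:(lra) ltac:(lra)). lra.
Qed.

Theorem mainTheorem11 (F g : R -> R) (beta : R)
  (F_mono : forall x y, x <= y -> F x <= F y)
  (F_lim_minf : is_lim F m_infty 0)
  (F_lim_pinf : is_lim F p_infty 1)
  (F_deriv : forall x, is_derive F x (g x))
  (g_cont : forall x, continuous g x)
  (g_sym : forall s, g (- s) = g s)
  (g_unimodal : forall s u, 0 <= s -> s <= u -> g u <= g s)
  (Hbeta : 0 < beta <= 1)
  (Hpos : forall t, g (t + lambda_beta F beta t) * g (t - lambda_beta F beta t) > 0)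
  (Hharm : forall t,
      g t >= 2 * (g (t + lambda_beta F beta t) * g (t - lambda_beta F beta t))
                 / (g (t + lambda_beta F beta t) + g (t - lambda_beta F beta t))) :
  (forall s t, 0 < s -> s <= t -> LD_S beta t F <= LD_S beta s F) /\
  (forall s t, s <= t -> t < 0 -> LD_S beta s F <= LD_S beta t F).
Proof.
  pose proof (g_nonneg F g F_mono F_deriv) as gnn.
  assert (gpos0 : forall x, 0 <= x -> 0 < g x).
  { intros x hx. pose proof (Hpos x). pose proof (lam_nonneg F beta x).
    pose proof (gnn (x + lambda_beta F beta x)). pose proof (gnn (x - lambda_beta F beta x)).
    pose proof (g_unimodal x (x + lambda_beta F beta x) hx ltac:(lra)).
    destruct H1 as [h|h]; [lra|]. rewrite <- h in H. lra. }
  assert (gpos : forall x, 0 < g x).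
  { intros x. destruct (Rle_or_lt 0 x). auto. rewrite <- g_sym. apply gpos0. lra. }
  pose proof (strict_of_pos F g F_deriv gpos) as Fstrict.
  destruct Hbeta as [b0 [b1|b1]].
  2:{ subst beta.
      assert (Z : forall t, LD_S 1 t F = 0).
      { intros t. unfold LD_S. cbv zeta.
        rewrite (lam_one F g t F_mono Fstrict F_lim_minf F_lim_pinf).
        rewrite Rplus_0_r, Rminus_0_r. ring. }
      split; intros; rewrite !Z; lra. }
  assert (Hr : forall t, 0 < lambda_beta F beta t /\
     F (t + lambda_beta F beta t) - F (t - lambda_beta F beta t) = beta).
  { intros t. apply (lam_root F g); auto. }
  set (A := fun t => F (t + lambda_beta F beta t) - F t).
  assert (Adec : forall s t, s <= t -> A t <= A s).
  { intros s t st. apply (deriv_decr A (fun t =>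
      2 * (g (t + lambda_beta F beta t) * g (t - lambda_beta F beta t)) /
      (g (t + lambda_beta F beta t) + g (t - lambda_beta F beta t)) - g t)); auto.
    - intros x. apply (dA F g beta (fun t => lambda_beta F beta t)); auto.
      intros; apply Hr.
    - intros x _. pose proof (Hharm x). lra. }
  assert (LDe : forall t, LD_S beta t F = 2 / beta ^ 2 * (A t * (beta - A t))).
  { intros t. unfold LD_S, A. cbv zeta. pose proof (Hr t). f_equal. f_equal. lra. }
  assert (c0 : 0 < 2 / beta ^ 2).
  { apply Rdiv_lt_0_compat. lra. apply pow_lt. lra. }
  split.
  - intros s t hs st. rewrite !LDe. apply Rmult_le_compat_l. lra.
    pose proof (Adec s t st).
    pose proof (half_pos F g s (lambda_beta F beta s) F_deriv g_sym g_unimodal ltac:(lra) ltac:(pose proof (Hr s); lra)).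
    pose proof (half_pos F g t (lambda_beta F beta t) F_deriv g_sym g_unimodal ltac:(lra) ltac:(pose proof (Hr t); lra)).
    pose proof (Hr s). pose proof (Hr t). unfold A in *. nra.
  - intros s t st ht. rewrite !LDe. apply Rmult_le_compat_l. lra.
    pose proof (Adec s t st).
    pose proof (half_neg F g s (lambda_beta F beta s) F_deriv g_sym g_unimodal ltac:(lra) ltac:(pose proof (Hr s); lra)).
    pose proof (half_neg F g t (lambda_beta F beta t) F_deriv g_sym g_unimodal ltac:(lra) ltac:(pose proof (Hr t); lra)).
    pose proof (Hr s). pose proof (Hr t). unfold A in *. nra.
Qed.
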